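(* Let $G=(V,E)$ be a multigraph with $|V|=s\ge 2$ and $|E|=m$. For every integer $g\ge 1$ satisfying $m\ge 2s+g+1$, there exists a subset of vertices $S\subseteq V$ with $|S|\le 8g\log(s)$ that spans at least $|S|+g$ edges.
   Context: A multigraph is a graph that may contain parallel edges and (possibly parallel) self-loops; edges are counted with multiplicity. A set of vertices $S$ spans an edge if all endpoints of the edge lie in $S$ (a self-loop at $v$ is spanned iff $v\in S$). Logarithms are base 2. *)

(* Defs.v *)
From mathcomp Require Import all_boot.
From Stdlib Require Import Reals.
Set Implicit Arguments. Unset Strict Implicit. Unset Printing Implicit Defensive.

(* A multigraph on the finite vertex type V: a finite type E of edges (edges
   are counted with multiplicity since distinct elements of E may have the
   same endpoints), each edge e having endpoints (ends e).1 and (ends e).2;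
   a self-loop is an edge with equal endpoints. *)

Definition spanned (V E : finType) (ends : E -> V * V) (S : {set V}) : {set E} :=
  [set e | ((ends e).1 \in S) && ((ends e).2 \in S)].

Definition log2 (x : R) : R := (ln x / ln 2)%R.

(* Main.v *)
Require Import Defs.
From mathcomp Require Import all_boot.
From Stdlib Require Import Reals Lra.
From mathcomp Require Import zify.

Lemma ln2_pos : (0 < ln 2)%R.
Proof. have := ln_lt_2. lra. Qed.

Lemma log2_le (x y : R) : (0 < x)%R -> (x <= y)%R -> (log2 x <= log2 y)%R.
Proof.
move=> hx hxy; rewrite /log2 /Rdiv.
apply: Rmult_le_compat_r; first by apply/Rlt_le/Rinv_0_lt_compat/ln2_pos.
case: (Rle_lt_or_eq_dec _ _ hxy) => h; last by rewrite h; apply: Rle_refl.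
by apply/Rlt_le/ln_increasing.
Qed.

Lemma INR_exp2 r : INR (expn 2 r) = (2 ^ r)%R.
Proof.
elim: r => [|r IH] //=. rewrite expnS mult_INR IH /=. lra.
Qed.

Lemma log2_pow_le (r n : nat) : (expn 2 r <= n)%N -> (INR r <= log2 (INR n))%R.
Proof.
move=> h.
have -> : INR r = log2 (INR (expn 2 r)).
  rewrite /log2 INR_exp2 ln_pow; last by apply: Rlt_0_2.
  have := ln2_pos => ?. rewrite /Rdiv Rmult_assoc Rinv_r; lra.
apply: log2_le; first by apply: lt_0_INR; apply/ltP; rewrite expn_gt0.
by apply: le_INR; apply/leP.
Qed.


Lemma sub_card (T : finType) (A : {set T}) k :
  k <= #|A| -> exists D : {set T}, D \subset A /\ #|D| = k.
Proof.
elim: k => [|k IH] hk; first by exists set0; rewrite sub0set cards0.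
have [D [sD cD]] := IH (ltnW hk).
have : 0 < #|A :\: D| by rewrite cardsD (setIidPr sD) cD subn_gt0.
case/card_gt0P => x; rewrite inE => /andP [xD xA].
exists (x |: D); split; first by rewrite subUset sub1set xA sD.
by rewrite cardsU1 xD cD.
Qed.

Lemma sum_part (E V : finType) (f : E -> V) (F : {set E}) (B : {set V}) :
  \sum_(u in B) #|[set e in F | f e == u]| = #|[set e in F | f e \in B]|.
Proof.
rewrite -sum1_card (partition_big f (mem B)); last by move=> e; rewrite inE => /andP [].
apply: eq_bigr => u uB; rewrite -sum1_card; apply: eq_bigl => e.
rewrite !inE; case: (f e =P u) => [->|]; rewrite ?uB ?andbT ?andbF //.
Qed.

Definition incF (V E : finType) (ends : E -> V * V) (F : {set E}) (u : V) :=
  [set e in F | ((ends e).1 == u) || ((ends e).2 == u)].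
Arguments incF {V E}.

Lemma growth (V E : finType) (ends : E -> V * V) (F : {set E}) (B B' : {set V}) :
  (forall u, u \in B -> 3 <= #|incF ends F u|) ->
  [set e in F | ((ends e).1 \in B) || ((ends e).2 \in B)] \subset spanned ends B' ->
  #|F :&: spanned ends B| <= #|B| -> #|F :&: spanned ends B'| <= #|B'| ->
  2 * #|B| <= #|B'|.
Proof.
move=> hdeg hA h1 h2.
set F1 := [set e in F | (ends e).1 \in B].
set F2 := [set e in F | (ends e).2 \in B].
have e1 : \sum_(u in B) #|[set e in F | (ends e).1 == u]| = #|F1| by rewrite sum_part.
have e2 : \sum_(u in B) #|[set e in F | (ends e).2 == u]| = #|F2| by rewrite sum_part.
have h3 : 3 * #|B| <= #|F1| + #|F2|.
  rewrite -e1 -e2 -big_split /= mulnC -sum_nat_const; apply: leq_sum => u uB.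
  apply: leq_trans (hdeg u uB) _.
  have -> : incF ends F u = [set e in F | (ends e).1 == u] :|: [set e in F | (ends e).2 == u].
    by apply/setP => e; rewrite !inE andb_orr.
  exact: leq_card_setU.
have U : F1 :|: F2 = [set e in F | ((ends e).1 \in B) || ((ends e).2 \in B)].
  by apply/setP => e; rewrite !inE andb_orr.
have I : F1 :&: F2 = F :&: spanned ends B.
  by apply/setP => e; rewrite !inE; case: (e \in F); rewrite ?andbF.
have := cardsUI F1 F2; rewrite U I => h4.
have h5 : #|[set e in F | ((ends e).1 \in B) || ((ends e).2 \in B)]| <= #|F :&: spanned ends B'|.
  apply: subset_leq_card; rewrite subsetI hA andbT.
  by apply/subsetP => e; rewrite inE => /andP [].
lia.
Qed.

Definition adj (V E : finType) (ends : E -> V * V) (B : {set V}) (x : V) (e : E) :=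
  (((ends e).1 \in B) && ((ends e).2 == x)) || (((ends e).2 \in B) && ((ends e).1 == x)).
Arguments adj {V E}.

Definition Nb (V E : finType) (ends : E -> V * V) (F : {set E}) (B : {set V}) :=
  B :|: [set x | [exists e in F, adj ends B x e]].
Arguments Nb {V E}.

Definition Ext (V E : finType) (ends : E -> V * V) (v : V) (B : {set V}) (T : {set E}) (r : nat) :=
  forall X : {set V}, X \subset B -> exists (P : {set V}) (Fp : {set E}),
    [/\ X \subset P, P \subset B, v \in P, #|P| <= 1 + r * #|X| &
     [/\ Fp \subset T, Fp \subset spanned ends P & #|P| <= #|Fp| + 1]].
Arguments Ext {V E}.

Lemma spanned_mono (V E : finType) (ends : E -> V * V) (S S' : {set V}) :
  S \subset S' -> spanned ends S \subset spanned ends S'.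
Proof.
move/subsetP=> h; apply/subsetP => e; rewrite !inE => /andP [a b].
by rewrite (h _ a) (h _ b).
Qed.

Lemma adj_key (V E : finType) (ends : E -> V * V) (B : {set V}) x e :
  x \notin B -> adj ends B x e ->
  x = (if (ends e).1 \in B then (ends e).2 else (ends e).1) /\
  (if (ends e).1 \in B then (ends e).1 else (ends e).2) \in B.
Proof.
rewrite /adj => xB /orP [/andP [h1 /eqP h2]|/andP [h1 /eqP h2]].
  by rewrite h1.
by subst x; rewrite (negbTE xB).
Qed.

Lemma step (V E : finType) (ends : E -> V * V) (F : {set E}) (B : {set V}) (T : {set E})
  (v : V) (r : nat) (e0 : E) :
  T \subset F :&: spanned ends B -> #|T| < #|B| -> Ext ends v B T r -> v \in B ->
  exists T' : {set E}, [/\ T' \subset F :&: spanned ends (Nb ends F B), #|T'| < #|Nb ends F B|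
                & Ext ends v (Nb ends F B) T' r.+1].
Proof.
move=> sT cT hExt vB.
set B' := Nb ends F B.
pose te x := odflt e0 [pick e in F | adj ends B x e].
pose pa x := if (ends (te x)).1 \in B then (ends (te x)).1 else (ends (te x)).2.
have Hn : forall x, x \in B' :\: B -> te x \in F /\ adj ends B x (te x).
  move=> x; rewrite !inE => /andP [xB /orP [xB'|]]; first by rewrite xB' in xB.
  move=> /existsP [e /andP [eF ea]]; rewrite /te; case: pickP => [e' /andP [? ?]|/(_ e)] //.
  by rewrite eF ea.
have Hk : forall x, x \in B' :\: B ->
    x = (if (ends (te x)).1 \in B then (ends (te x)).2 else (ends (te x)).1) /\ pa x \in B.
  move=> x hx; have [_ ha] := Hn x hx; apply: adj_key => //.
  by move: hx; rewrite inE => /andP [].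
have Hsp : forall x (P : {set V}), x \in B' :\: B -> x \in P -> pa x \in P -> te x \in spanned ends P.
  move=> x P hx xP; have [h1 _] := Hk x hx; move: h1; rewrite /pa inE.
  by case: ifP => _ h1 pP; rewrite -h1 xP pP.
have Hnsp : forall x, x \in B' :\: B -> te x \notin spanned ends B.
  move=> x hx; have [h1 _] := Hk x hx; move: hx h1; rewrite !inE => /andP [xB _].
  by case: ifP => _ h1 //; rewrite -h1 (negbTE xB) andbF.
have Hinj : {in B' :\: B &, injective te}.
  move=> x y hx hy exy; have [h1 _] := Hk x hx; have [h2 _] := Hk y hy.
  by rewrite h1 h2 exy.
have BB' : B \subset B' by apply: subsetUl.
have cB' : #|B| + #|B' :\: B| = #|B'| by rewrite -(cardsID B B') (setIidPr BB').
exists (T :|: te @: (B' :\: B)); split.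
- rewrite subUset; apply/andP; split.
    apply: subset_trans sT _; rewrite setIS //; exact: spanned_mono.
  apply/subsetP => _ /imsetP [x hx ->]; rewrite inE (Hn x hx).1 Hsp //.
    by move: hx; rewrite inE => /andP [].
  by have [_ h] := Hk x hx; apply: (subsetP BB').
- apply: leq_ltn_trans (leq_card_setU _ _) _.
  have := leq_imset_card te (B' :\: B); lia.
move=> X sX.
set Xo := X :\: B; set Xi := X :&: B; set X' := Xi :|: pa @: Xo.
have XoB : Xo \subset B' :\: B by rewrite setSD.
have X'B : X' \subset B.
  rewrite subUset subsetIr /=; apply/subsetP => _ /imsetP [x hx ->].
  by have [_ h] := Hk x (subsetP XoB _ hx).
have [P' [Fp' [sXP' sP'B vP' cP' [sFp' sFpsp cPF]]]] := hExt X' X'B.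
exists (P' :|: Xo), (Fp' :|: te @: Xo); split.
- apply/subsetP => x xX; rewrite inE; case xB: (x \in B).
    by rewrite (subsetP sXP') // !inE xX xB.
  by rewrite !inE xB xX orbT.
- rewrite subUset (subset_trans sP'B BB') /=; apply: subset_trans sX; exact: subsetDl.
- by rewrite inE vP'.
- have h1 : #|P' :|: Xo| <= #|P'| + #|Xo| := leq_card_setU P' Xo.
  have h2 : #|X'| <= #|Xi| + #|Xo|.
    apply: leq_trans (leq_card_setU _ _) _; rewrite leq_add2l; exact: leq_imset_card.
  have h3 : #|Xi| + #|Xo| = #|X| by rewrite cardsID.
  have h4 : r * #|X'| <= r * #|X| by apply: leq_mul; [exact: leqnn | lia].
  rewrite mulSn; lia.
split.
- rewrite subUset (subset_trans sFp' (subsetUl _ _)) /=.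
  apply/subsetP => _ /imsetP [x hx ->]; rewrite inE; apply/orP; right.
  by apply: imset_f; apply: (subsetP XoB).
- rewrite subUset (subset_trans sFpsp (@spanned_mono _ _ ends _ _ (subsetUl _ _))) /=.
  apply/subsetP => _ /imsetP [x hx ->]; apply: Hsp; first exact: (subsetP XoB).
    by rewrite inE hx orbT.
  by rewrite inE (subsetP sXP') // inE; apply/orP; right; apply: imset_f.
- have h1 : #|P' :|: Xo| <= #|P'| + #|Xo| := leq_card_setU P' Xo.
  have h2 : #|te @: Xo| = #|Xo|.
    by apply: card_in_imset => x y hx hy; apply: Hinj; apply: (subsetP XoB).
  have h3 : Fp' :&: te @: Xo = set0.
    apply/setP => e; rewrite !inE; apply/negP => /andP [h /imsetP [x hx ex]].
    have := Hnsp x (subsetP XoB _ hx); rewrite -ex.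
    have := subsetP (subset_trans sFpsp (subxx _)) e h.
    by have /subsetP := subset_trans sFp' sT => /(_ e h); rewrite inE => /andP [_ ->].
  have := cardsUI Fp' (te @: Xo); rewrite h3 cards0 h2.
  lia.
Qed.

Lemma extract (V E : finType) (ends : E -> V * V) (F : {set E}) (B : {set V}) (T : {set E})
  (v : V) (r : nat) :
  T \subset F :&: spanned ends B -> #|T| < #|B| -> Ext ends v B T r ->
  #|B| + 1 <= #|F :&: spanned ends B| ->
  exists C : {set V}, [/\ C \subset B, #|C| <= 1 + r * 4 & #|C| + 1 <= #|F :&: spanned ends C|].
Proof.
move=> sT cT hExt cF.
set R := (F :&: spanned ends B) :\: T.
have cR : 2 <= #|R|.
  have := cardsID T (F :&: spanned ends B).
  have : #|F :&: spanned ends B :&: T| <= #|T| by apply: subset_leq_card; exact: subsetIr.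
  rewrite -/R; lia.
have [e1 e1R] : exists e1, e1 \in R by apply/card_gt0P; lia.
have [e2 e2R] : exists e2, e2 \in R :\ e1.
  by apply/card_gt0P; rewrite (cardsD1 e1 R) e1R in cR; rewrite setDE -setDE; lia.
move: e2R; rewrite in_setD1 => /andP [ne e2R].
have hR : forall e, e \in R -> [/\ e \in F, e \notin T & (ends e).1 \in B /\ (ends e).2 \in B].
  by move=> e; rewrite !inE => /andP [-> /andP [-> /andP [-> ->]]].
have [e1F e1T [a1 b1]] := hR e1 e1R.
have [e2F e2T [a2 b2]] := hR e2 e2R.
set X := [set x in [:: (ends e1).1; (ends e1).2; (ends e2).1; (ends e2).2]].
have XB : X \subset B.
  by apply/subsetP => x; rewrite !inE => /or4P [] /eqP ->.
have cX : #|X| <= 4 by rewrite /X cardsE; exact: card_size.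
have [P [Fp [sXP sPB vP cP [sFT sFsp cPF]]]] := hExt X XB.
exists P; split => //.
  apply: leq_trans cP _; rewrite leq_add2l; exact: leq_mul.
have e12 : forall e, e \in [set e1; e2] -> e \in F :&: spanned ends P.
  move=> e; rewrite !inE => /orP [] /eqP ->; rewrite ?e1F ?e2F /=;
  apply/andP; split; apply: (subsetP sXP); rewrite !inE eqxx ?orbT //.
have : #|Fp :|: [set e1; e2]| <= #|F :&: spanned ends P|.
  apply: subset_leq_card; rewrite subUset; apply/andP; split.
    rewrite subsetI sFsp andbT; apply: subset_trans sFT _.
    by apply: subset_trans sT _; exact: subsetIl.
  by apply/subsetP.
have : Fp :&: [set e1; e2] = set0.
  apply/setP => e; rewrite !inE; apply/negP => /andP [eF /orP [] /eqP ex]; subst e.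
    by move: e1T; rewrite (subsetP sFT _ eF).
  by move: e2T; rewrite (subsetP sFT _ eF).
have := cardsUI Fp [set e1; e2]; rewrite cards2 eq_sym (negbTE ne) => h E0.
rewrite E0 cards0 /= addn0 in h => h2; move: cPF; clear -h h2; lia.
Qed.

Lemma Nb_sub (V E : finType) (ends : E -> V * V) (F : {set E}) (W B : {set V}) :
  (forall e, e \in F -> (ends e).1 \in W /\ (ends e).2 \in W) ->
  B \subset W -> Nb ends F B \subset W.
Proof.
move=> hFW BW; rewrite subUset BW /=; apply/subsetP => x; rewrite inE.
move=> /existsP [e /andP [eF /orP [] /andP [_ /eqP <-]]]; by have [] := hFW e eF.
Qed.

Lemma bfs (V E : finType) (ends : E -> V * V) (F : {set E}) (W : {set V}) (v : V) (e0 : E) :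
  (forall e, e \in F -> (ends e).1 \in W /\ (ends e).2 \in W) ->
  (forall u, u \in W -> 3 <= #|incF ends F u|) ->
  v \in W ->
  forall r, (exists (C : {set V}) (k : nat), [/\ C \subset W, #|C| <= 1 + k * 4,
                 expn 2 k <= 2 * #|W| & #|C| + 1 <= #|F :&: spanned ends C|])
   \/ (exists (B : {set V}) (T : {set E}), [/\ v \in B, B \subset W, T \subset F :&: spanned ends B,
          #|T| < #|B| & [/\ Ext ends v B T r, expn 2 r <= #|B| & #|F :&: spanned ends B| <= #|B|]]).
Proof.
move=> hFW hdeg vW; elim => [|r IH].
  case h: (#|F :&: spanned ends [set v]| <= 1).
    right; exists [set v], set0; split; rewrite ?in_set1 ?sub1set ?sub0set ?cards0 ?cards1 //.
    split => //.
    move=> X XB; exists [set v], set0; split; rewrite ?in_set1 ?sub0set ?cards0 ?cards1 //.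
  left; exists [set v], 0; split; rewrite ?sub1set ?cards1 //.
    by rewrite expn0 muln_gt0 /= card_gt0; apply/set0Pn; exists v.
  by rewrite ltnNge h.
case: IH => [[C [k [h1 h2 h3 h4]]]|[B [T [vB BW sT cT [hE c2 cF]]]]].
  left; exists C, k; split => //; lia.
have [T' [sT' cT' hE']] := @step _ _ ends F B T v r e0 sT cT hE vB.
have B'W := @Nb_sub _ _ ends F W B hFW BW.
case h: (#|Nb ends F B| + 1 <= #|F :&: spanned ends (Nb ends F B)|).
  have [C [CB cC eC]] := @extract _ _ ends F _ _ v r.+1 sT' cT' hE' h.
  left; exists C, r.+1; split => //.
    exact: subset_trans CB B'W.
  rewrite expnS leq_mul2l /=; apply: leq_trans c2 _; exact: subset_leq_card.
right; exists (Nb ends F B), T'; split => //.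
  by rewrite inE vB.
split => //; last by move/negbT: (h); rewrite -ltnNge addn1 ltnS.
have g : 2 * #|B| <= #|Nb ends F B|.
  apply: (@growth _ _ ends F) => //.
  - by move=> u uB; apply: hdeg; apply: (subsetP BW).
  - apply/subsetP => e; rewrite !inE => /andP [eF /orP [] eB].
      rewrite eB /=; apply/orP; right; apply/existsP; exists e; rewrite eF /adj eB eqxx //.
    rewrite eB andbT; apply/orP; right; apply/existsP; exists e; by rewrite eF /adj eB !eqxx ?andbT ?orbT.
  - by move/negbT: (h); rewrite -ltnNge addn1 ltnS.
rewrite expnS; apply: leq_trans g; by rewrite leq_mul2l.
Qed.

Lemma log2_ge1 (n : nat) : 2 <= n -> (1 <= log2 (INR n))%R.
Proof. move=> h; have := @log2_pow_le 1 n; rewrite expn1 /= => /(_ h). done. Qed.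

Lemma small_case (V E : finType) (ends : E -> V * V) (F : {set E}) (W : {set V}) (g : nat) :
  (forall e, e \in F -> (ends e).1 \in W /\ (ends e).2 \in W) ->
  2 <= #|W| -> #|W| <= 8 * g -> #|W| + g <= #|F| ->
  exists C : {set V}, [/\ C \subset W, (INR #|C| <= INR (8 * g) * log2 (INR #|W|))%R
                      & #|C| + g <= #|F :&: spanned ends C|].
Proof.
move=> hFW h2 h8 hF; exists W; split => //.
  have hl := @log2_ge1 _ h2.
  have : (INR #|W| <= INR (8 * g))%R by apply: le_INR; apply/leP.
  have : (0 <= INR (8 * g))%R by apply: pos_INR.
  nra.
have -> : F :&: spanned ends W = F.
  apply/setIidPl/subsetP => e eF; have [a b] := hFW e eF; by rewrite inE a b.
done.
Qed.

Lemma lemma1 (V E : finType) (ends : E -> V * V) (n : nat) :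
  forall (W : {set V}) (F : {set E}), #|W| <= n ->
  (forall e, e \in F -> (ends e).1 \in W /\ (ends e).2 \in W) ->
  2 <= #|W| -> 2 * #|W| + 2 <= #|F| ->
  exists C : {set V}, [/\ C \subset W, (INR #|C| <= INR (8 * 1) * log2 (INR #|W|))%R
                      & #|C| + 1 <= #|F :&: spanned ends C|].
Proof.
elim: n => [|n IH] W F hn hFW h2 hF; first by move: h2 hn; clear; lia.
case h8: (#|W| <= 8 * 1).
  by apply: small_case => //; lia.
have INRW : (0 < INR #|W|)%R by apply: lt_0_INR; apply/ltP; lia.
case: (boolP [exists u in W, #|incF ends F u| <= 2]) => [/existsP [u /andP [uW cu]] | hno].
  set I := incF ends F u.
  have cW := cardsD1 u W; rewrite uW /= in cW.
  have hFI : #|F :&: I| <= 2 by apply: leq_trans cu; apply: subset_leq_card; exact: subsetIr.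
  have cF := cardsD F I.
  have hFW' : forall e, e \in F :\: I -> (ends e).1 \in W :\ u /\ (ends e).2 \in W :\ u.
    move=> e; rewrite !inE => /andP [eI eF]; move: eI; rewrite eF /= negb_or => /andP [a b].
    by have [c d] := hFW e eF; rewrite a b c d.
  have h1 : #|W :\ u| <= n by lia.
  have h2' : 2 <= #|W :\ u| by lia.
  have h3 : 2 * #|W :\ u| + 2 <= #|F :\: I| by lia.
  have [C [CW hC eC]] := IH (W :\ u) (F :\: I) h1 hFW' h2' h3.
  exists C; split.
  - by apply: subset_trans CW _; exact: subsetDl.
  - apply: Rle_trans hC _; apply: Rmult_le_compat_l; first by apply: pos_INR.
    apply: log2_le; first by apply: lt_0_INR; apply/ltP; lia.
    by apply: le_INR; apply/leP; lia.
  - apply: leq_trans eC _; apply: subset_leq_card; apply: setSI; exact: subsetDl.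
have hdeg : forall u, u \in W -> 3 <= #|incF ends F u|.
  by move=> u uW; move/existsPn: hno => /(_ u); rewrite uW /= -ltnNge.
have [v vW] : exists v, v \in W by apply/card_gt0P; lia.
have [e0 _] : exists e0, e0 \in F by apply/card_gt0P; lia.
have [[C [k [CW cC ck eC]]]|[B [T [_ BW _ _ [_ c2 _]]]]] := @bfs _ _ ends F W v e0 hFW hdeg vW #|W|; last first.
  have := ltn_expl #|W| (isT : 1 < 2); have := subset_leq_card BW.
  move: c2; clear; lia.
exists C; split => //.
have hj : expn 2 k.-1 <= #|W|.
  case: (k) ck => [|k'] /=; first by rewrite expn0; lia.
  by rewrite expnS leq_mul2l.
set j := k.-1 in hj *.
have L1 := @log2_pow_le _ _ hj.
have L2 : (2 <= log2 (INR #|W|))%R.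
  have := @log2_pow_le 2 #|W|; rewrite /=; apply; rewrite expnS expn1; lia.
have : (INR #|C| <= INR (5 + j * 4))%R.
  by apply: le_INR; apply/leP; rewrite /j; move: cC; clear; lia.
rewrite plus_INR mult_INR /=. lra.
Qed.

Lemma gen (V E : finType) (g : nat) : 1 <= g -> forall (ends : E -> V * V) (W : {set V}) (F : {set E}),
  (forall e, e \in F -> (ends e).1 \in W /\ (ends e).2 \in W) ->
  2 <= #|W| -> 2 * #|W| + g + 1 <= #|F| ->
  exists S : {set V}, [/\ S \subset W, (INR #|S| <= INR (8 * g) * log2 (INR #|W|))%R
                      & #|S| + g <= #|F :&: spanned ends S|].
Proof.
elim: g => [//|g IH] _ ends W F hFW h2 hF.
have INRW : (0 < INR #|W|)%R by apply: lt_0_INR; apply/ltP; lia.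
have L1 := @log2_ge1 _ h2.
have [C [CW hC eC]] := @lemma1 V E ends #|W| W F (leqnn _) hFW h2 (ltac:(lia)).
case g0 : (g == 0); first by move/eqP: g0 => g0; subst g; exists C.
have g1 : 1 <= g by rewrite lt0n g0.
case CeW: (W \subset C).
  exists W; split => //.
  - have : (INR #|W| <= INR #|C|)%R by apply: le_INR; apply/leP; apply: subset_leq_card.
    have : (INR (8 * 1) <= INR (8 * g.+1))%R by apply: le_INR; apply/leP; lia.
    rewrite !mult_INR /=. move: hC; rewrite mult_INR /=; nra.
  - have -> : F :&: spanned ends W = F.
      apply/setIidPl/subsetP => e eF; have [a b] := hFW e eF; by rewrite inE a b.
    lia.
have [w wC] : exists w, w \in C.
  apply/card_gt0P; rewrite lt0n; apply/negP => /eqP /cards0_eq C0.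
  move: eC; rewrite C0; have -> : F :&: spanned ends set0 = set0.
    by apply/setP => e; rewrite !inE; case: (e \in F).
  by rewrite !cards0.
have wW : w \in W by apply: (subsetP CW).
have C0 : 0 < #|C| by apply/card_gt0P; exists w.
pose f x := if x \in C then w else x.
pose ends' e := (f (ends e).1, f (ends e).2).
have [D [DF cD]] := @sub_card _ (F :&: spanned ends C) #|C| (ltac:(lia)).
set F' := F :\: D.
set W' := (W :\: C) :|: [set w].
have fW : forall x, x \in W -> f x \in W'.
  move=> x xW; rewrite /f !inE; case: ifP => xC; first by rewrite eqxx orbT.
  by rewrite xC xW.
have hFW' : forall e, e \in F' -> (ends' e).1 \in W' /\ (ends' e).2 \in W'.
  move=> e; rewrite inE => /andP [_ eF]; have [a b] := hFW e eF; split; exact: fW.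
have cWC : #|W :\: C| + #|C| = #|W| by rewrite cardsD (setIidPr CW) subnK // subset_leq_card.
have cW' : #|W'| = #|W :\: C| + 1.
  rewrite cardsU cards1; have -> : (W :\: C) :&: [set w] = set0.
    by apply/setP => x; rewrite !inE; case: (x =P w) => [->|]; rewrite ?wC ?andbF.
  by rewrite cards0 subn0.
have nWC : 0 < #|W :\: C|.
  apply/card_gt0P; move/negbT: CeW => /subsetPn [x xW xC]; exists x; by rewrite inE xC.
have DsF : D \subset F by apply: subset_trans DF _; exact: subsetIl.
have cF' : #|F'| + #|D| = #|F| by rewrite cardsD (setIidPr DsF) subnK // subset_leq_card.
have [S' [S'W hS' eS']] : exists S' : {set V}, [/\ S' \subset W', (INR #|S'| <= INR (8 * g) * log2 (INR #|W'|))%R & #|S'| + g <= #|F' :&: spanned ends' S'|].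
  apply: IH => //; rewrite cW'; lia.
set A := F' :&: spanned ends' S'.
set S := (S' :\ w) :|: C.
have S'C : (S' :\ w) :&: C = set0.
  apply/setP => x; rewrite !inE; apply/negP => /andP [/andP [xw xS] xC].
  move: (subsetP S'W _ xS); rewrite !inE xC (negbTE xw) /=; done.
have key : forall x, f x \in S' -> x \in S.
  move=> x; rewrite /f /S !inE; case: ifP => xC h; first by rewrite orbT.
  rewrite h andbT; apply/orP; left; apply/negP => /eqP ex; by rewrite ex wC in xC.
have AS : A \subset F :&: spanned ends S.
  apply/subsetP => e; rewrite inE => /andP [eF' esp].
  have eF : e \in F by move: eF'; rewrite inE => /andP [].
  move: esp; rewrite inE /ends' /= => /andP [a b].
  rewrite !inE eF /=; move: (key _ a) (key _ b); rewrite !inE => -> -> //.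
have CS : F :&: spanned ends C \subset F :&: spanned ends S.
  apply: setIS; apply: spanned_mono; exact: subsetUr.
have hsize : (INR #|S| <= INR (8 * g.+1) * log2 (INR #|W|))%R.
  have : (INR #|S| <= INR #|S'| + INR #|C|)%R.
    rewrite -plus_INR; apply: le_INR; apply/leP.
    apply: leq_trans (leq_card_setU _ _) _; rewrite leq_add2r; apply: subset_leq_card; exact: subsetDl.
  have : (log2 (INR #|W'|) <= log2 (INR #|W|))%R.
    apply: log2_le; first by apply: lt_0_INR; apply/ltP; rewrite cW'; lia.
    by apply: le_INR; apply/leP; rewrite cW'; lia.
  have : (0 <= INR (8 * g))%R by apply: pos_INR.
  move: hS' hC; rewrite !mult_INR INR_1 S_INR => k1 k2 k3 k4 k5.
  rewrite (S_INR g); have K0 : (0 <= INR 7)%R by apply: pos_INR.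
  have : ((INR 7 + 1) * 1 * INR g * log2 (INR #|W'|) <= (INR 7 + 1) * 1 * INR g * log2 (INR #|W|))%R by apply: Rmult_le_compat_l.
  move=> k6; lra.
exists S; split => //.
  rewrite subUset CW andbT; apply/subsetP => x; rewrite !inE => /andP [xw xS].
  by move: (subsetP S'W _ xS); rewrite !inE (negbTE xw) orbF => /andP [].
case wS: (w \in S').
  have cS : #|S| + 1 = #|S'| + #|C|.
    have := cardsUI (S' :\ w) C; rewrite S'C cards0 -/S addn0 => ->.
    rewrite (cardsD1 w S') wS /=; lia.
  have AD : A :&: D = set0.
    apply/setP => e; rewrite inE in_set0; apply/negP => /andP [eA eD].
    by have := subsetP (subsetIl _ _) e eA; rewrite inE eD.
  have : #|A :|: D| <= #|F :&: spanned ends S|.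
    apply: subset_leq_card; rewrite subUset AS /=; apply: subset_trans DF CS.
  have := cardsUI A D; rewrite AD cards0 addn0 cD.
  move: eS' cS; rewrite -/A; clear; lia.
have Sw : S' :\ w = S'.
  by apply/setP => x; rewrite !inE; case: (x =P w) => [->|] //=; rewrite wS.
have cS : #|S| = #|S'| + #|C|.
  have := cardsUI (S' :\ w) C; rewrite S'C cards0 addn0 -/S Sw => <-. done.
have AC : A :&: (F :&: spanned ends C) = set0.
  apply/setP => e; rewrite !inE; apply/negP => /andP [/andP [_ /andP [a _]] /andP [_ /andP [c _]]].
  by move: a; rewrite /ends' /f /= c wS.
have : #|A :|: (F :&: spanned ends C)| <= #|F :&: spanned ends S|.
  by apply: subset_leq_card; rewrite subUset AS CS.
have := cardsUI A (F :&: spanned ends C); rewrite AC cards0 addn0.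
move: eS' cS eC; rewrite -/A; clear; lia.
Qed.

Theorem lemma3p2 (V E : finType) (ends : E -> V * V) (g : nat) :
  2 <= #|V| -> 1 <= g -> 2 * #|V| + g + 1 <= #|E| ->
  exists S : {set V},
    (INR #|S| <= INR (8 * g) * log2 (INR #|V|))%R /\
    #|S| + g <= #|spanned ends S|.
Proof.
move=> h2 hg hE.
have [|||S [_ hS eS]] := @gen V E g hg ends [set: V] [set: E].
- by move=> e _; rewrite !inE.
- by rewrite cardsT.
- by rewrite !cardsT.
exists S; split; first by rewrite cardsT in hS.
by rewrite setTI in eS.
Qed.
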